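(* Let $p\leq q$ be positive integers, $n=p+q$, and let $M$ be an $n\times n$ complex matrix. Then $M$ satisfies $M=M^*$ and $M^*I_{p,q}M=I_{p,q}$ if and only if there exist an integer $k$ with $0\leq k\leq q$, vectors $z_1^+,\dots,z_k^+\in\mathbb{C}^p$ that are pairwise orthogonal (some of them possibly zero), and vectors $z_1^-,\dots,z_k^-\in\mathbb{C}^q$ that are pairwise orthogonal (some of them possibly zero), such that for every $j$ \[ \|z_j^+\|^2+\|z_j^-\|^2=1,\qquad \|z_j^+\|^2\neq\|z_j^-\|^2, \] and such that either $M$ or $-M$ equals \[ \sum_{j=1}^k\lambda_j z_jz_j^*-I_{p,q},\qquad\text{where } z_j=\begin{pmatrix}z_j^+\\ z_j^-\end{pmatrix}\in\mathbb{C}^n,\quad \lambda_j=\frac{2}{\|z_j^+\|^2-\|z_j^-\|^2}. \]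
   Context: $I_{p,q}=\mathrm{diag}\{I_p,-I_q\}$, where $I_p$ is the $p\times p$ identity matrix; $M^*$ and $z^*$ denote conjugate transposes; $\|\cdot\|$ and orthogonality refer to the standard Euclidean (Hermitian) inner product $\langle u,v\rangle=u^*v$. Throughout the paper it is assumed that $p\leq q$. *)

(* Defs.v *)
(* Complex numbers: an arbitrary numClosedFieldType C
   (e.g. algC, or R[i] for a real closed field R); conjugation is conjC. *)
From HB Require Import structures.
From mathcomp Require Import all_boot all_order all_algebra.
From mathcomp Require Export sesquilinear spectral.
Set Implicit Arguments. Unset Strict Implicit. Unset Printing Implicit Defensive.
Import Order.TTheory GRing.Theory Num.Theory.
Local Open Scope ring_scope.
Local Open Scope sesquilinear_scope.

Definition Ipq (C : numClosedFieldType) (p q : nat) : 'M[C]_(p + q) :=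
  block_mx 1%:M 0 0 (- 1%:M).

Definition adj (C : numClosedFieldType) (m n : nat) (M : 'M[C]_(m, n)) : 'M[C]_(n, m) :=
  M ^t*.

Definition hdot (C : numClosedFieldType) (n : nat) (u v : 'cV[C]_n) : C :=
  (adj u *m v) 0 0.

Definition nrm2 (C : numClosedFieldType) (n : nat) (u : 'cV[C]_n) : C := hdot u u.

(* Main.v *)
Require Import Defs.
From HB Require Import structures.
From mathcomp Require Import all_boot all_order all_algebra zify.
Import Order.TTheory GRing.Theory Num.Theory.
Local Open Scope ring_scope.
Set Implicit Arguments. Unset Strict Implicit.

Section Aux.
Variable C : numClosedFieldType.
Local Notation J p q := (Ipq C p q).

Lemma adjK m n (A : 'M[C]_(m, n)) : adj (adj A) = A.
Proof. exact: trmxCK. Qed.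
Lemma adjM m n r (A : 'M[C]_(m, n)) (B : 'M[C]_(n, r)) : adj (A *m B) = adj B *m adj A.
Proof. by rewrite /adj trmx_mul map_mxM. Qed.
Lemma adjD m n (A B : 'M[C]_(m, n)) : adj (A + B) = adj A + adj B.
Proof. by rewrite /adj linearD map_mxD. Qed.
Lemma adjN m n (A : 'M[C]_(m, n)) : adj (- A) = - adj A.
Proof. by rewrite /adj linearN map_mxN. Qed.
Lemma adjZ m n c (A : 'M[C]_(m, n)) : adj (c *: A) = c^* *: adj A.
Proof. by rewrite /adj linearZ /= map_mxZ. Qed.
Lemma adj_sum m n k (F : 'I_k -> 'M[C]_(m, n)) : adj (\sum_(j < k) F j) = \sum_(j < k) adj (F j).
Proof.
elim/big_ind2: _ => //; last by move=> x y a b <- <-; rewrite adjD.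
by rewrite /adj linear0 map_mx0.
Qed.
Lemma adj_col m1 m2 n (A : 'M[C]_(m1, n)) (B : 'M[C]_(m2, n)) :
  adj (col_mx A B) = row_mx (adj A) (adj B).
Proof. by rewrite /adj tr_col_mx map_row_mx. Qed.

Lemma adjJ p q : adj (J p q) = J p q.
Proof.
rewrite /adj /Ipq tr_block_mx map_block_mx !trmx0 !map_mx0 linearN /= map_mxN trmx1 map_mx1 trmx1 (map_mx1 Num.conj_op) //.
Qed.
Lemma JJ p q : J p q *m J p q = 1%:M.
Proof.
rewrite /Ipq mulmx_block !mulmx0 !mul0mx !mulmx1 !addr0 !add0r mulNmx mul1mx opprK.
by rewrite -scalar_mx_block.
Qed.
Lemma JcolE p q (a : 'cV[C]_p) (b : 'cV[C]_q) : J p q *m col_mx a b = col_mx a (- b).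
Proof. by rewrite /Ipq mul_block_col !mul0mx mul1mx addr0 add0r mulNmx mul1mx. Qed.

Lemma hdot_col p q (a c : 'cV[C]_p) (b d : 'cV[C]_q) :
  hdot (col_mx a b) (col_mx c d) = hdot a c + hdot b d.
Proof. by rewrite /hdot adj_col mul_row_col [LHS]mxE. Qed.
Lemma Jdot_col p q (a c : 'cV[C]_p) (b d : 'cV[C]_q) :
  (adj (col_mx a b) *m J p q *m col_mx c d) 0 0 = hdot a c - hdot b d.
Proof. by rewrite -mulmxA JcolE adj_col mul_row_col mulmxN [LHS]mxE [X in _ + X]mxE. Qed.


Lemma adjE m n (A : 'M[C]_(m, n)) i j : adj A i j = (A j i)^*.
Proof. by rewrite /adj !mxE. Qed.

Lemma hdotC n (u v : 'cV[C]_n) : (hdot u v)^* = hdot v u.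
Proof.
by rewrite /hdot -adjE adjM adjK.
Qed.

Lemma termE n (J : 'M[C]_n) (a b : C) (x y : 'cV[C]_n) :
  (a *: (x *m adj x)) *m J *m (b *: (y *m adj y)) =
  (a * b * (adj x *m J *m y) 0 0) *: (x *m adj y).
Proof.
rewrite -!scalemxAl -scalemxAr scalerA.
have -> : x *m adj x *m J *m (y *m adj y) = x *m (adj x *m J *m y) *m adj y.
  by rewrite !mulmxA.
by rewrite {1}[adj x *m J *m y]mx11_scalar mul_mx_scalar -scalemxAl scalerA.
Qed.

Lemma PJP n k (z : 'I_k -> 'cV[C]_n) (J : 'M[C]_n) (lam : 'I_k -> C) :
  (forall i j, i != j -> (adj (z i) *m J *m z j) 0 0 = 0) ->
  (forall i, lam i * (adj (z i) *m J *m z i) 0 0 = 2) ->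
  let P := \sum_(i < k) lam i *: (z i *m adj (z i)) in P *m J *m P = 2 *: P.
Proof.
move=> h0 h2 P; rewrite /P mulmx_suml mulmx_suml scaler_sumr.
apply: eq_bigr => i _; rewrite mulmx_sumr (bigD1 i) //= big1 ?addr0.
  by rewrite termE -mulrA h2 mulrC scalerA.
by move=> j ji; rewrite termE h0 1?eq_sym // mulr0 scale0r.
Qed.

Lemma from_P n (J P : 'M[C]_n) : adj J = J -> J *m J = 1%:M ->
  adj P = P -> P *m J *m P = 2 *: P ->
  let N := P - J in adj N = N /\ adj N *m J *m N = J.
Proof.
move=> hJ hJJ hP hPJP N; rewrite /N adjD adjN hP hJ; split => //.
rewrite !mulmxBl !mulmxBr hPJP -!mulmxA hJJ mulmx1 !mulmxA hJJ !mul1mx.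
rewrite scaler_nat /= mulr2n.
by rewrite mulmx1 addrK opprB addrC subrK.
Qed.


Lemma conj_diagE m n (U : 'M[C]_(m, n)) (e : 'rV[C]_m) a b :
  (adj U *m diag_mx e *m U) a b = \sum_(j < m) (U j a)^* * e 0 j * U j b.
Proof.
rewrite mul_mx_diag !mxE; apply: eq_bigr => j _; rewrite !mxE.
by [].
Qed.

Lemma spec_nz n (A : 'M[C]_n) : adj A = A ->
  exists k (U : 'M[C]_(k, n)) (e : 'rV[C]_k),
    [/\ U *m adj U = 1%:M, (forall j, e 0 j != 0) & A = adj U *m diag_mx e *m U].
Proof.
move=> hA.
have hH : A \is hermsymmx.
  by apply/is_hermitianmxP; rewrite expr0 scale1r; exact: esym hA.
have /hermitian_normalmx /orthomx_spectralP := hH.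
rewrite invmx_unitary ?spectral_unitarymx //.
have /unitarymxP PP := spectral_unitarymx A.
set P := spectralmx A in PP *; set d := spectral_diag A => hAe.
pose S := [set i | d 0 i != 0].
exists #|S|, (\matrix_(j < #|S|, c < n) P (enum_val j) c), (\row_j d 0 (enum_val j)).
split.
- apply/matrixP => j j'.
  have /matrixP /(_ (enum_val j) (enum_val j')) := PP.
  rewrite !mxE (inj_eq enum_val_inj) => <-.
  by apply: eq_bigr => c _; rewrite !mxE.
- by move=> j; rewrite mxE; have := enum_valP j; rewrite inE.
- apply/matrixP => a b; rewrite {1}hAe !conj_diagE.
  rewrite (bigID (fun i => i \in S)) /= [X in _ + X]big1 ?addr0; last first.
    by move=> i; rewrite inE negbK => /eqP ->; rewrite mulr0 mul0r.
  rewrite big_enum_val; apply: eq_bigr => j _; rewrite !mxE.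
  by [].
Qed.

Lemma entry_row m n r (U : 'M[C]_(m, n)) (V : 'M[C]_(r, n)) (X : 'M[C]_n) i j :
  (row i U *m X *m adj (row j V)) 0 0 = (U *m X *m adj V) i j.
Proof.
rewrite !mxE; apply: eq_bigr => c _; rewrite !mxE; congr (_ * _).
by apply: eq_bigr => c' _; rewrite !mxE.
Qed.

Lemma rel k n (U : 'M[C]_(k, n)) (e : 'rV[C]_k) (J : 'M[C]_n) :
  U *m adj U = 1%:M -> (forall j, e 0 j != 0) ->
  let A := adj U *m diag_mx e *m U in A *m J *m A = 2 *: A ->
  forall i j, (U *m J *m adj U) i j * e 0 j = 2 *+ (i == j).
Proof.
move=> hU he A hA i j.
have hUA : U *m A *m adj U = diag_mx e.
  by rewrite /A !mulmxA hU mul1mx -mulmxA hU mulmx1.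
have hUA' : U *m A = diag_mx e *m U.
  by rewrite /A !mulmxA hU mul1mx.
have hAU : A *m adj U = adj U *m diag_mx e.
  by rewrite /A -!mulmxA hU mulmx1.
clearbody A.
have := congr1 (fun X => U *m X *m adj U) hA => /=.
have -> : U *m (A *m J *m A) *m adj U =
  diag_mx e *m (U *m J *m adj U) *m diag_mx e.
  by rewrite !mulmxA hUA' -mulmxA hAU !mulmxA.
rewrite -scalemxAr -scalemxAl hUA.
set X := U *m J *m adj U.
move=> /matrixP /(_ i j); rewrite mul_mx_diag mul_diag_mx !mxE.
case: (eqVneq i j) => [<-|nij] /=.
  rewrite mulr1n => /eqP; rewrite -mulrA mulrC -subr_eq0 -mulrBl mulf_eq0.
  by rewrite (negbTE (he i)) orbF subr_eq0 => /eqP.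
rewrite mulr0n mulr0 mulr0n -mulrA => /eqP; rewrite mulf_eq0 (negbTE (he i)) /=.
by move/eqP.
Qed.


Lemma entry_row1 m n r (U : 'M[C]_(m, n)) (V : 'M[C]_(r, n)) i j :
  (row i U *m adj (row j V)) 0 0 = (U *m adj V) i j.
Proof. by rewrite !mxE; apply: eq_bigr => c _; rewrite !mxE. Qed.

Lemma both0 (x y : C) : x + y = 0 -> x - y = 0 -> x = 0 /\ y = 0.
Proof.
move=> h1 /eqP; rewrite subr_eq0 => /eqP exy; subst y.
suff -> : x = 0 by [].
move: h1 => /eqP; rewrite -mulr2n -mulr_natl mulf_eq0 pnatr_eq0 /=.
by move/eqP.
Qed.

Lemma core p q (A : 'M[C]_(p + q)) : adj A = A -> A *m J p q *m A = 2 *: A ->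
  exists k (zp : 'I_k -> 'cV[C]_p) (zm : 'I_k -> 'cV[C]_q),
    [/\ (k <= \rank A)%N,
        (forall i j : 'I_k, i != j ->
           hdot (zp i) (zp j) = 0 /\ hdot (zm i) (zm j) = 0),
        (forall j : 'I_k, nrm2 (zp j) + nrm2 (zm j) = 1),
        (forall j : 'I_k, nrm2 (zp j) != nrm2 (zm j)) &
        A = \sum_(j < k)
               ((2 / (nrm2 (zp j) - nrm2 (zm j))) *:
                  (col_mx (zp j) (zm j) *m adj (col_mx (zp j) (zm j))))].
Proof.
move=> hA hAJA.
have [k [U [e [hU he hAe]]]] := spec_nz hA.
have hr : forall i j, (U *m J p q *m adj U) i j * e 0 j = 2 *+ (i == j).
  by apply: (rel hU he); rewrite -hAe.
pose u j := adj (row j U).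
have hd : forall i j, hdot (usubmx (u i)) (usubmx (u j)) + hdot (dsubmx (u i)) (dsubmx (u j))
    = (i == j)%:R.
  move=> i j; rewrite -hdot_col !vsubmxK /hdot /u adjK entry_row1 hU mxE.
  by [].
have hJ : forall i j, hdot (usubmx (u i)) (usubmx (u j)) - hdot (dsubmx (u i)) (dsubmx (u j))
    = (U *m J p q *m adj U) i j.
  by move=> i j; rewrite -Jdot_col !vsubmxK /u adjK entry_row.
exists k, (fun j => usubmx (u j)), (fun j => dsubmx (u j)).
split.
- have hD : U *m A *m adj U = diag_mx e.
    by rewrite hAe !mulmxA hU mul1mx -mulmxA hU mulmx1.
  have hunit : diag_mx e \in unitmx.
    by rewrite unitmxE det_diag unitfE; apply/prodf_neq0 => i _; exact: he.
  rewrite -[k](mxrank_unit hunit) -hD.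
  exact: leq_trans (mxrankM_maxl _ _) (mxrankM_maxr _ _).
- move=> i j nij; apply: both0; first by rewrite hd (negbTE nij).
  rewrite hJ; have := hr i j; rewrite (negbTE nij) mulr0n => /eqP.
  by rewrite mulf_eq0 (negbTE (he j)) orbF => /eqP.
- by move=> j; rewrite /nrm2 hd eqxx.
- move=> j; rewrite -subr_eq0 /nrm2 hJ; apply/eqP => h0.
  by have := hr j j; rewrite h0 mul0r eqxx mulr1n => /eqP; rewrite eq_sym pnatr_eq0.
- rewrite {1}hAe; apply/matrixP => a b; rewrite conj_diagE summxE.
  apply: eq_bigr => j _; rewrite vsubmxK /nrm2 hJ.
  have -> : 2 / (U *m J p q *m adj U) j j = e 0 j.
    have := hr j j; rewrite eqxx mulr1n => <-.
    rewrite mulrC mulKf //; apply/eqP => h0.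
    by have := hr j j; rewrite h0 mul0r eqxx mulr1n => /eqP; rewrite eq_sym pnatr_eq0.
  rewrite !mxE big_ord1 /u !mxE.
  by rewrite conjCK mulrCA mulrA.
Qed.


Lemma plusJ n (J N : 'M[C]_n) : adj J = J -> J *m J = 1%:M ->
  adj N = N -> N *m J *m N = J ->
  adj (N + J) = N + J /\ (N + J) *m J *m (N + J) = 2 *: (N + J).
Proof.
move=> hJ hJJ hN hNJN; rewrite adjD hJ hN; split => //.
have e1 : N *m J *m J = N by rewrite -mulmxA hJJ mulmx1.
have e2 : J *m J *m N = N by rewrite hJJ mul1mx.
have e3 : J *m J *m J = J by rewrite hJJ mul1mx.
rewrite !mulmxDl !mulmxDr hNJN e1 e2 e3.
rewrite scaler_nat /= mulr2n.
rewrite addrC -!addrA; congr (_ + _); rewrite addrCA; congr (_ + _).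
by rewrite addrC.
Qed.

Lemma rank_sum n (A B X : 'M[C]_n) : X *m X = 1%:M -> A *m (X *m B) = 0 ->
  (\rank A + \rank B <= n)%N.
Proof.
move=> hX hAB.
have /mxrankS : (A <= kermx (X *m B))%MS by apply/sub_kermxP.
rewrite mxrank_ker => h1.
have h2 : (\rank B <= \rank (X *m B))%N.
  by rewrite -{1}[B]mul1mx -hX -mulmxA mxrankM_maxr.
have h3 : (\rank (X *m B) <= n)%N by exact: rank_leq_row.
lia.
Qed.

End Aux.

Theorem lemma3p4 (C : numClosedFieldType) (p q : nat) (hp : (0 < p)%N) (hpq : (p <= q)%N)
    (M : 'M[C]_(p + q)) :
  (M = adj M /\ adj M *m Ipq C p q *m M = Ipq C p q) <->
  exists (k : nat) (zp : 'I_k -> 'cV[C]_p) (zm : 'I_k -> 'cV[C]_q),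
    [/\ (k <= q)%N,
        (forall i j : 'I_k, i != j ->
           hdot (zp i) (zp j) = 0 /\ hdot (zm i) (zm j) = 0),
        (forall j : 'I_k, nrm2 (zp j) + nrm2 (zm j) = 1),
        (forall j : 'I_k, nrm2 (zp j) != nrm2 (zm j)) &
        (let S := \sum_(j < k)
               ((2 / (nrm2 (zp j) - nrm2 (zm j))) *:
                  (col_mx (zp j) (zm j) *m adj (col_mx (zp j) (zm j))))
               - Ipq C p q in
         M = S \/ - M = S)].
Proof.
have hJ := adjJ C p q; have hJJ := JJ C p q.
set J := Ipq C p q in hJ hJJ *.
split.
- move=> [hMa hMJ].
  have hM : M *m J *m M = J by rewrite {1}hMa.
  have [h1 h1'] := plusJ hJ hJJ (esym hMa) hM.
  have hMa' : adj (- M) = - M by rewrite adjN -hMa.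
  have hM' : (- M) *m J *m (- M) = J by rewrite mulNmx mulmxN mulNmx opprK.
  have [h2 h2'] := plusJ hJ hJJ hMa' hM'.
  have hr : (\rank (M + J)%R + \rank (- M + J)%R <= p + q)%N.
    apply: (rank_sum hJJ).
    have e1 : M *m J *m J = M by rewrite -mulmxA hJJ mulmx1.
    have e2 : J *m J *m M = M by rewrite hJJ mul1mx.
    have e3 : J *m J *m J = J by rewrite hJJ mul1mx.
    rewrite mulmxA !mulmxDl !mulmxDr !mulmxN hM e1 e2 e3.
    by rewrite addrA addrK addNr.
  case: (leqP (\rank (M + J)%R) q) => hq.
    have [k [zp [zm [hk ho hn hne hS]]]] := core h1 h1'.
    exists k, zp, zm; split => //; first by
      have hk' : (k <= \rank (M + J)%R)%N := hk;
      move: hq hk'; generalize (\rank (M + J)%R) => a /= x1 x2; lia.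
    by left; rewrite -hS addrK.
  have [k [zp [zm [hk ho hn hne hS]]]] := core h2 h2'.
  exists k, zp, zm; split => //.
    have hk' : (k <= \rank (- M + J)%R)%N := hk.
    move: hr hq hk' hpq; generalize (\rank (M + J)%R) (\rank (- M + J)%R) => a b /= x1 x2 x3 x4.
    lia.
  by right; rewrite -hS addrK.
- move=> [k [zp [zm [hk ho hn hne hS]]]].
  pose z j := col_mx (zp j) (zm j).
  pose lam j := 2 / (nrm2 (zp j) - nrm2 (zm j)).
  pose P := \sum_(j < k) lam j *: (z j *m adj (z j)).
  have hP : adj P = P.
    rewrite /P adj_sum; apply: eq_bigr => j _.
    rewrite adjZ adjM adjK; congr (_ *: _).
    by rewrite /lam fmorph_div rmorphB /= rmorph_nat /nrm2 !hdotC.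
  have hPJP : P *m J *m P = 2 *: P.
    apply: (PJP (z := z) (lam := lam)).
      by move=> i j nij; rewrite Jdot_col; have [-> ->] := ho i j nij; rewrite subrr.
    move=> i; rewrite Jdot_col /lam divfK // subr_eq0; exact: hne.
  have [hN1 hN2] := from_P hJ hJJ hP hPJP.
  case: hS => /= hS.
    by rewrite hS; split => //; rewrite hN1.
  have -> : M = - (P - J) by rewrite -hS opprK.
  split; first by rewrite adjN hN1.
  by rewrite adjN hN1 !mulNmx mulmxN opprK -{1}hN1.
Qed.
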